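(* Let $k\ge2$, $\sigma_i=\frac{i(k-i)}2$ for $i=0,\dots,k$, and consider the system for $(b_2,\dots,b_k)$: $$\dot b_i=(b_i+\sigma_{i-1})(b_{i-1}-2b_i+b_{i+1}),\qquad i=2,\dots,k,$$ with the convention $b_1\equiv b_{k+1}\equiv0$. For all $\eta\in(0,\frac15]$ and $A\ge0$, the compact set $K=\prod_{i=2}^k[-\sigma_{i-1}+\eta,A]$ is stable (forward invariant) under the flow of this system. In particular, any solution whose initial data lies in $K$ is global (for forward times). *)

(* Defs.v *)
From Stdlib Require Import Reals Lra Lia.
From Coquelicot Require Import Coquelicot.
Open Scope R_scope.

Definition sigma (k i : nat) : R := INR i * (INR k - INR i) / 2.

(* A state is b : nat -> R, only the indices 2..k are meaningful.
   Extension with the convention b_1 = b_{k+1} = 0 (and 0 outside 2..k). *)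
Definition bext (k : nat) (b : nat -> R) (i : nat) : R :=
  if andb (Nat.leb 2 i) (Nat.leb i k) then b i else 0.

Definition rhs (k : nat) (b : nat -> R) (i : nat) : R :=
  (b i + sigma k (i - 1)) * (bext k b (i - 1) - 2 * b i + bext k b (i + 1)).

Definition inK (k : nat) (eta A : R) (b : nat -> R) : Prop :=
  forall i : nat, (2 <= i <= k)%nat -> - sigma k (i - 1) + eta <= b i <= A.

Definition is_solution (k : nat) (T : Rbar) (b : R -> nat -> R) : Prop :=
  (forall i : nat, (2 <= i <= k)%nat ->
     filterlim (fun s => b s i) (at_right 0) (locally (b 0 i))) /\
  (forall t : R, 0 < t -> Rbar_lt t T ->
     forall i : nat, (2 <= i <= k)%nat ->
       is_derive (fun s => b s i) t (rhs k (b t) i)).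

(* Main.v *)
Require Import Defs.
From Stdlib Require Import Reals Lra Lia Classical Arith.
From Coquelicot Require Import Coquelicot.
Import Defs.
Open Scope R_scope.

Lemma lip_cont (f : R -> R) (C : R) : 0 <= C ->
  (forall x y, Rabs (f x - f y) <= C * Rabs (x - y)) -> forall x, continuous f x.
Proof.
  intros HC Hf x. apply filterlim_locally. intros eps.
  assert (Hp : 0 < eps / (C+1)) by (apply Rdiv_lt_0_compat; [apply cond_pos|lra]).
  exists (mkposreal _ Hp). intros y Hy. change (Rabs (f y - f x) < eps).
  change (Rabs (y - x) < eps / (C+1)) in Hy.
  assert (E: eps / (C+1) * (C+1) = eps) by (field; lra).
  pose proof (Hf y x). pose proof (cond_pos eps). pose proof (Rabs_pos (y-x)). nra.
Qed.

Lemma deriv_pos_left (h : R -> R) (t d a : R) :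
  is_derive h t d -> 0 < d -> a < t -> exists r, a < r < t /\ h r < h t.
Proof.
  intros Hd Hpos Ha. apply is_derive_Reals in Hd.
  destruct (Hd (d/2) ltac:(lra)) as [del Hdel].
  assert (Hm1: 0 < Rmin del (t-a)) by (apply Rmin_glb_lt; [apply cond_pos|lra]).
  assert (Hm2: Rmin del (t-a) <= del) by apply Rmin_l.
  assert (Hm3: Rmin del (t-a) <= t - a) by apply Rmin_r.
  set (hh := - Rmin del (t - a) / 2).
  assert (H0 : hh <> 0) by (unfold hh; lra).
  assert (H1 : Rabs hh < del) by (unfold hh; rewrite Rabs_left; lra).
  specialize (Hdel hh H0 H1).
  exists (t + hh). split. unfold hh; lra.
  apply Rabs_def2 in Hdel. destruct Hdel as [_ Hl].
  assert (Hq : (h (t+hh) - h t)/hh > 0) by lra.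
  assert (hh < 0) by (unfold hh; lra).
  assert (h (t+hh) - h t = ((h (t+hh) - h t)/hh) * hh) by (field; lra).
  nra.
Qed.

Lemma fin_delta (k : nat) (Q : nat -> R -> Prop) :
  (forall i d d', 0 < d' <= d -> Q i d -> Q i d') ->
  (forall i, (2 <= i <= k)%nat -> exists d, 0 < d /\ Q i d) ->
  exists d, 0 < d /\ forall i, (2 <= i <= k)%nat -> Q i d.
Proof.
  intros Hmon H. induction k as [|k IH].
  - exists 1. split; [lra|]. intros; lia.
  - destruct IH as [d1 [Hd1 H1]]. { intros i Hi; apply H; lia. }
    destruct (Compare_dec.le_lt_dec 2 (S k)) as [Hk|Hk].
    + destruct (H (S k) ltac:(lia)) as [d2 [Hd2 H2]].
      exists (Rmin d1 d2). split. apply Rmin_glb_lt; auto.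
      intros i Hi. destruct (Nat.eq_dec i (S k)) as [->|Hne].
      * apply Hmon with d2; [split; [apply Rmin_glb_lt; auto| apply Rmin_r]|auto].
      * apply Hmon with d1; [split; [apply Rmin_glb_lt; auto| apply Rmin_l]|apply H1; lia].
    + exists d1. split; auto. intros; apply H1; lia.
Qed.

Definition inbox (k:nat) (lo hi : nat -> R) (d : R) (y : nat -> R) :=
  forall j, (2 <= j <= k)%nat -> lo j - d <= y j <= hi j + d.
Definition sinbox (k:nat) (lo hi : nat -> R) (d : R) (y : nat -> R) :=
  forall j, (2 <= j <= k)%nat -> lo j - d < y j < hi j + d.

Lemma invariance k (lo hi : nat -> R) (V : (nat -> R) -> nat -> R) (d0 : R) (T : Rbar)
  (x : R -> nat -> R) :
  0 < d0 ->
  (forall d y i, 0 <= d < d0 -> inbox k lo hi d y -> (2<=i<=k)%nat ->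
     (y i = hi i + d -> V y i <= 0) /\ (y i = lo i - d -> 0 <= V y i)) ->
  (forall i, (2<=i<=k)%nat -> filterlim (fun s => x s i) (at_right 0) (locally (x 0 i))) ->
  (forall t, 0 < t -> Rbar_lt t T -> forall i, (2<=i<=k)%nat ->
      is_derive (fun s => x s i) t (V (x t) i)) ->
  inbox k lo hi 0 (x 0) ->
  forall t, 0 <= t -> Rbar_lt t T -> inbox k lo hi 0 (x t).
Proof.
  intros Hd0 Hsign Hinit Hder Hx0 t0 Ht0 HtT.
  assert (HltT : forall s, s <= t0 -> Rbar_lt s T).
  { intros s Hs. apply Rbar_le_lt_trans with (Finite t0); [exact Hs|exact HtT]. }
  assert (Hcont : forall i s, (2<=i<=k)%nat -> 0 <= s -> s <= t0 -> forall eta, 0 < eta ->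
     exists del, 0 < del /\ forall r, 0 <= r -> Rabs (r - s) < del -> Rabs (x r i - x s i) < eta).
  { intros i s Hi Hs Hst eta Heta.
    destruct (Req_dec s 0) as [->|Hs0].
    - pose proof (proj1 (filterlim_locally _ _) (Hinit i Hi) (mkposreal eta Heta)) as Hl.
      destruct Hl as [del Hdel]. exists del. split; [apply cond_pos|].
      intros r Hr Hrd. destruct (Req_dec r 0) as [->|Hr0].
      + rewrite Rminus_eq_0, Rabs_R0; auto.
      + apply (Hdel r Hrd). lra.
    - assert (Hc: continuous (fun r => x r i) s).
      { apply (ex_derive_continuous (K:=R_AbsRing) (V:=R_NormedModule) (fun r => x r i) s). eexists. apply Hder; auto; lra. }
      destruct (proj1 (filterlim_locally _ _) Hc (mkposreal eta Heta)) as [del Hdel].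
      exists del. split;[apply cond_pos|]. intros r _ Hrd. apply (Hdel r Hrd). }
  assert (Key : forall eps, 0 < eps -> eps * (1 + t0) < d0 -> sinbox k lo hi (eps * (1 + t0)) (x t0)).
  { intros eps Heps Hepsd.
    set (P := fun s => sinbox k lo hi (eps * (1 + s)) (x s)).
    assert (P0 : P 0).
    { intros j Hj. destruct (Hx0 j Hj). lra. }
    set (E := fun s => 0 <= s <= t0 /\ forall r, 0 <= r <= s -> P r).
    assert (HE0 : E 0). { split. lra. intros r Hr. replace r with 0 by lra. exact P0. }
    destruct (completeness E) as [tau [Hub Hlub]].
    { exists t0. intros s Hs. apply Hs. }
    { exists 0. exact HE0. }
    assert (Htau0 : 0 <= tau) by (apply Hub; exact HE0).
    assert (Htaut : tau <= t0) by (apply Hlub; intros s Hs; apply Hs).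
    assert (Ha : forall r, 0 <= r < tau -> P r).
    { intros r Hr. apply NNPP. intros HnP.
      assert (Hubr : is_upper_bound E r).
      { intros s Hs. apply Rnot_lt_le. intros Hrs. apply HnP. apply Hs. lra. }
      specialize (Hlub r Hubr). lra. }
    assert (Hc : inbox k lo hi (eps * (1 + tau)) (x tau)).
    { intros j Hj. destruct (Req_dec tau 0) as [Ht|Ht].
      { rewrite Ht. destruct (P0 j Hj). lra. }
      split; apply Rnot_lt_le; intros Hc.
      - set (g := lo j - eps * (1 + tau) - x tau j).
        destruct (Hcont j tau Hj Htau0 Htaut (g/2) ltac:(unfold g; lra)) as [del [Hdel Hd]].
        set (r := tau - Rmin del tau / 2).
        assert (0 < Rmin del tau) by (apply Rmin_glb_lt; lra).
        assert (Rmin del tau <= del) by apply Rmin_l.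
        assert (Rmin del tau <= tau) by apply Rmin_r.
        assert (Hr : 0 <= r < tau) by (unfold r; lra).
        specialize (Hd r ltac:(lra) ltac:(unfold r; rewrite Rabs_left; lra)).
        destruct (Ha r Hr j Hj). apply Rabs_def2 in Hd. unfold g in *. nra.
      - set (g := x tau j - (hi j + eps * (1 + tau))).
        destruct (Hcont j tau Hj Htau0 Htaut (g/2) ltac:(unfold g; lra)) as [del [Hdel Hd]].
        set (r := tau - Rmin del tau / 2).
        assert (0 < Rmin del tau) by (apply Rmin_glb_lt; lra).
        assert (Rmin del tau <= del) by apply Rmin_l.
        assert (Rmin del tau <= tau) by apply Rmin_r.
        assert (Hr : 0 <= r < tau) by (unfold r; lra).
        specialize (Hd r ltac:(lra) ltac:(unfold r; rewrite Rabs_left; lra)).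
        destruct (Ha r Hr j Hj). apply Rabs_def2 in Hd. unfold g in *. nra. }
    assert (Hs : P tau).
    { intros j Hj. destruct (Req_dec tau 0) as [Ht|Ht].
      { rewrite Ht. apply P0; auto. }
      assert (Htp : 0 < tau) by lra.
      assert (Hdtau : 0 <= eps * (1 + tau) < d0) by nra.
      destruct (Hsign _ _ j Hdtau Hc Hj) as [Hup Hlo].
      destruct (Hc j Hj) as [Hl Hh]. split.
      - destruct Hl as [Hl|Hl]; auto. exfalso.
        assert (HD : is_derive (fun r => minus (x r j) (lo j - eps * (1 + r))) tau
                       (minus (V (x tau) j) (- eps))).
        { apply (is_derive_minus (fun r => x r j) (fun r => lo j - eps * (1 + r)) tau (V (x tau) j) (- eps)). apply Hder; auto. auto_derive; auto; ring. }
        destruct (deriv_pos_left _ _ _ 0 HD) as [r [Hr Hhr]].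
        { specialize (Hlo (eq_sym Hl)). unfold minus, plus, opp; simpl. lra. }
        { lra. }
        destruct (Ha r ltac:(lra) j Hj). unfold minus, plus, opp in Hhr; simpl in Hhr. lra.
      - destruct Hh as [Hh|Hh]; auto. exfalso.
        assert (HD : is_derive (fun r => minus (hi j + eps * (1 + r)) (x r j)) tau
                       (minus eps (V (x tau) j))).
        { apply (is_derive_minus (fun r => hi j + eps * (1 + r)) (fun r => x r j) tau eps (V (x tau) j)). auto_derive; auto; ring. apply Hder; auto. }
        destruct (deriv_pos_left _ _ _ 0 HD) as [r [Hr Hhr]].
        { specialize (Hup Hh). unfold minus, plus, opp; simpl. lra. }
        { lra. }
        destruct (Ha r ltac:(lra) j Hj). unfold minus, plus, opp in Hhr; simpl in Hhr. lra. }
    destruct (Rle_lt_or_eq_dec tau t0 Htaut) as [Hlt|Heq].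
    2:{ rewrite <- Heq. exact Hs. }
    exfalso.
    destruct (fin_delta k (fun j del => forall r, 0 <= r -> Rabs (r - tau) < del ->
                 lo j - eps * (1 + r) < x r j < hi j + eps * (1 + r))) as [del [Hdel Hall]].
    { intros j d d' Hd' Hq r Hr Hrd. apply Hq; auto; lra. }
    { intros j Hj. destruct (Hs j Hj) as [Hl Hh].
      set (g := Rmin (x tau j - (lo j - eps * (1 + tau))) (hi j + eps * (1 + tau) - x tau j)).
      assert (Hg : 0 < g) by (apply Rmin_glb_lt; lra).
      assert (Hg1 : g <= x tau j - (lo j - eps * (1 + tau))) by apply Rmin_l.
      assert (Hg2 : g <= hi j + eps * (1 + tau) - x tau j) by apply Rmin_r.
      destruct (Hcont j tau Hj Htau0 Htaut (g/2) ltac:(lra)) as [d1 [Hd1 Hq]].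
      assert (Hd2 : 0 < g / (2 * eps)) by (apply Rdiv_lt_0_compat; lra).
      exists (Rmin d1 (g / (2 * eps))). split. apply Rmin_glb_lt; auto.
      intros r Hr Hrd.
      assert (Rmin d1 (g / (2 * eps)) <= d1) by apply Rmin_l.
      assert (Hm : Rmin d1 (g / (2 * eps)) <= g / (2 * eps)) by apply Rmin_r.
      specialize (Hq r Hr ltac:(lra)). apply Rabs_def2 in Hq.
      assert (Hb : Rabs (eps * (1 + r) - eps * (1 + tau)) < g / 2).
      { replace (eps * (1 + r) - eps * (1 + tau)) with (eps * (r - tau)) by ring.
        rewrite Rabs_mult, Rabs_pos_eq by lra.
        assert (E2 : eps * (g / (2 * eps)) = g / 2) by (field; lra). nra. }
      apply Rabs_def2 in Hb. lra. }
    set (r' := Rmin (tau + del / 2) t0).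
    assert (r' <= tau + del/2) by apply Rmin_l.
    assert (r' <= t0) by apply Rmin_r.
    assert (Hr'tau : tau < r') by (apply Rmin_glb_lt; lra).
    assert (HEr : E r').
    { split. lra. intros r Hr. destruct (Rlt_or_le r tau) as [Hrt|Hrt].
      - apply Ha; lra.
      - intros j Hj. apply Hall; auto. lra. rewrite Rabs_pos_eq; lra. }
    specialize (Hub r' HEr). lra. }
  intros j Hj. split; apply Rnot_lt_le; intro Hc.
  - set (gap := lo j - 0 - x t0 j).
    set (e := Rmin (gap/2) (d0/2)).
    assert (He : 0 < e) by (apply Rmin_glb_lt; unfold gap; lra).
    assert (He1 : e <= gap/2) by apply Rmin_l.
    assert (He2 : e <= d0/2) by apply Rmin_r.
    assert (Hep : 0 < e / (1 + t0)) by (apply Rdiv_lt_0_compat; lra).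
    assert (Ee : e / (1 + t0) * (1 + t0) = e) by (field; lra).
    specialize (Key _ Hep ltac:(lra) j Hj). rewrite Ee in Key. unfold gap in *. lra.
  - set (gap := x t0 j - (hi j + 0)).
    set (e := Rmin (gap/2) (d0/2)).
    assert (He : 0 < e) by (apply Rmin_glb_lt; unfold gap; lra).
    assert (He1 : e <= gap/2) by apply Rmin_l.
    assert (He2 : e <= d0/2) by apply Rmin_r.
    assert (Hep : 0 < e / (1 + t0)) by (apply Rdiv_lt_0_compat; lra).
    assert (Ee : e / (1 + t0) * (1 + t0) = e) by (field; lra).
    specialize (Key _ Hep ltac:(lra) j Hj). rewrite Ee in Key. unfold gap in *. lra.
Qed.

Lemma sigma_bounds k j : (j <= k)%nat -> 0 <= sigma k j <= INR k * INR k.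
Proof.
  intros H. unfold sigma. pose proof (pos_INR j). pose proof (le_INR _ _ H). nra.
Qed.

Lemma sigma_half k j : (1 <= j)%nat -> (j < k)%nat -> 1/2 <= sigma k j.
Proof.
  intros H1 H2. unfold sigma. apply le_INR in H1, H2. rewrite S_INR in H2. simpl in H1. nra.
Qed.

Lemma sigma_id k m : sigma k m + sigma k (S (S m)) = 2 * sigma k (S m) - 1.
Proof. unfold sigma. rewrite !S_INR. field. Qed.

Lemma range_of j k : (Nat.leb 2 j && Nat.leb j k)%bool = true -> (2 <= j <= k)%nat.
Proof. intros H. apply andb_prop in H. destruct H as [H1 H2]. apply Nat.leb_le in H1, H2. lia. Qed.

Lemma bext_ge k y j lb : ((2 <= j <= k)%nat -> lb <= y j) -> lb <= 0 -> lb <= bext k y j.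
Proof.
  intros H1 H2. unfold bext. destruct (Nat.leb 2 j && Nat.leb j k)%bool eqn:E; auto.
  apply H1, range_of, E.
Qed.

Lemma bext_le k y j ub : ((2 <= j <= k)%nat -> y j <= ub) -> 0 <= ub -> bext k y j <= ub.
Proof.
  intros H1 H2. unfold bext. destruct (Nat.leb 2 j && Nat.leb j k)%bool eqn:E; auto.
  apply H1, range_of, E.
Qed.

Lemma bext_abs k y j B : (forall j, (2 <= j <= k)%nat -> Rabs (y j) <= B) -> 0 <= B ->
  Rabs (bext k y j) <= B.
Proof.
  intros H1 H2. unfold bext. destruct (Nat.leb 2 j && Nat.leb j k)%bool eqn:E.
  apply H1, range_of, E. rewrite Rabs_R0; auto.
Qed.

Lemma bext_diff k y z j d : (forall j, (2 <= j <= k)%nat -> Rabs (y j - z j) <= d) -> 0 <= d ->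
  Rabs (bext k y j - bext k z j) <= d.
Proof.
  intros H1 H2. unfold bext. destruct (Nat.leb 2 j && Nat.leb j k)%bool eqn:E.
  apply H1, range_of, E. rewrite Rminus_0_r, Rabs_R0; auto.
Qed.

Lemma bext_ext k y z j : (forall j, (2 <= j <= k)%nat -> y j = z j) -> bext k y j = bext k z j.
Proof.
  intros H. unfold bext. destruct (Nat.leb 2 j && Nat.leb j k)%bool eqn:E; auto.
  apply H, range_of, E.
Qed.

Lemma rhs_ext k y z i : (forall j, (2 <= j <= k)%nat -> y j = z j) -> (2 <= i <= k)%nat ->
  rhs k y i = rhs k z i.
Proof.
  intros H Hi. unfold rhs. rewrite (H i Hi), (bext_ext k y z (i-1) H), (bext_ext k y z (i+1) H).
  reflexivity.
Qed.

Lemma sign_rhs k eta A d y i : 0 < eta <= 1/5 -> 0 <= A -> 0 <= d < eta ->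
  (forall j, (2 <= j <= k)%nat -> - sigma k (j - 1) + eta - d <= y j <= A + d) ->
  (2 <= i <= k)%nat ->
  (y i = A + d -> rhs k y i <= 0) /\ (y i = - sigma k (i - 1) + eta - d -> 0 <= rhs k y i).
Proof.
  intros Heta HA Hd Hy Hi.
  assert (Hc : 0 <= y i + sigma k (i - 1)) by (destruct (Hy i Hi); lra).
  split; intros Heq; unfold rhs.
  - assert (H1 : bext k y (i - 1) <= A + d) by (apply bext_le; [intros Hj; apply Hy, Hj|lra]).
    assert (H2 : bext k y (i + 1) <= A + d) by (apply bext_le; [intros Hj; apply Hy, Hj|lra]).
    rewrite Heq in *. nra.
  - assert (H1 : - sigma k (i - 1 - 1) - d <= bext k y (i - 1)).
    { apply bext_ge. intros Hj. destruct (Hy _ Hj). lra.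
      destruct (sigma_bounds k (i - 1 - 1) ltac:(lia)). lra. }
    assert (H2 : - sigma k (i + 1 - 1) - d <= bext k y (i + 1)).
    { apply bext_ge. intros Hj. destruct (Hy _ Hj). lra.
      destruct (sigma_bounds k (i + 1 - 1) ltac:(lia)). lra. }
    assert (Hid : sigma k (i - 1 - 1) + sigma k (i + 1 - 1) = 2 * sigma k (i - 1) - 1).
    { destruct i as [|[|m]]; try lia.
      replace (S (S m) - 1 - 1)%nat with m by lia.
      replace (S (S m) + 1 - 1)%nat with (S (S m)) by lia.
      replace (S (S m) - 1)%nat with (S m) by lia. apply sigma_id. }
    apply Rmult_le_pos; auto. lra.
Qed.

Lemma rhs_bound k y i B : 0 <= B -> (forall j, (2 <= j <= k)%nat -> Rabs (y j) <= B) ->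
  (2 <= i <= k)%nat -> 0 <= sigma k (i - 1) <= B -> Rabs (rhs k y i) <= 8 * B * B.
Proof.
  intros HB Hy Hi Hs. unfold rhs.
  pose proof (bext_abs k y (i-1) B Hy HB) as H1.
  pose proof (bext_abs k y (i+1) B Hy HB) as H2.
  pose proof (Hy i Hi) as H3.
  apply Rabs_le_between in H1, H2, H3.
  rewrite Rabs_mult.
  replace (8 * B * B) with ((2 * B) * (4 * B)) by ring.
  apply Rmult_le_compat; try apply Rabs_pos; apply Rabs_le_between; lra.
Qed.

Lemma rhs_lip k y z i B d : 0 <= B -> 0 <= d ->
  (forall j, (2 <= j <= k)%nat -> Rabs (y j) <= B) ->
  (forall j, (2 <= j <= k)%nat -> Rabs (z j) <= B) ->
  (forall j, (2 <= j <= k)%nat -> Rabs (y j - z j) <= d) ->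
  (2 <= i <= k)%nat -> 0 <= sigma k (i - 1) <= B ->
  Rabs (rhs k y i - rhs k z i) <= 12 * B * d.
Proof.
  intros HB Hd Hy Hz Hyz Hi Hs. unfold rhs.
  pose proof (bext_abs k y (i-1) B Hy HB) as H1.
  pose proof (bext_abs k y (i+1) B Hy HB) as H2.
  pose proof (Hy i Hi) as H3. pose proof (Hz i Hi) as H4.
  pose proof (bext_diff k y z (i-1) d Hyz Hd) as H5.
  pose proof (bext_diff k y z (i+1) d Hyz Hd) as H6.
  pose proof (Hyz i Hi) as H7.
  set (a := y i + sigma k (i - 1)). set (b := z i + sigma k (i - 1)).
  set (u := bext k y (i - 1) - 2 * y i + bext k y (i + 1)).
  set (v := bext k z (i - 1) - 2 * z i + bext k z (i + 1)).
  replace (a * u - b * v) with ((y i - z i) * u + b * (u - v)) by (unfold a, b; ring).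
  pose proof H7 as H8. apply Rabs_le_between in H1, H2, H3, H4, H5, H6, H8.
  assert (Hu : Rabs u <= 4 * B) by (apply Rabs_le_between; unfold u; lra).
  assert (Hb : Rabs b <= 2 * B) by (apply Rabs_le_between; unfold b; lra).
  assert (Huv : Rabs (u - v) <= 4 * d) by (apply Rabs_le_between; unfold u, v; lra).
  eapply Rle_trans. apply Rabs_triang. rewrite !Rabs_mult.
  assert (Rabs (y i - z i) * Rabs u <= d * (4 * B))
    by (apply Rmult_le_compat; auto; apply Rabs_pos).
  assert (Rabs b * Rabs (u - v) <= (2 * B) * (4 * d))
    by (apply Rmult_le_compat; auto; apply Rabs_pos).
  lra.
Qed.

Definition lo k eta i := - sigma k (i - 1) + eta.
Definition clip k eta A (y : nat -> R) j := Rmax (lo k eta j) (Rmin A (y j)).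
Definition G k eta A (y : nat -> R) i := rhs k (clip k eta A y) i.
Definition Bk k A := A + INR k * INR k + 1.

Lemma clip_lip c A u v : Rabs (Rmax c (Rmin A u) - Rmax c (Rmin A v)) <= Rabs (u - v).
Proof.
  unfold Rmin; repeat match goal with |- context [Rle_dec ?a ?b] => destruct (Rle_dec a b) end;
  unfold Rmax;
  repeat match goal with |- context [Rle_dec ?a ?b] => destruct (Rle_dec a b) end;
  unfold Rabs; repeat match goal with |- context [Rcase_abs ?a] => destruct (Rcase_abs a) end;
  lra.
Qed.

Lemma rmax0_lip u v : Rabs (Rmax 0 u - Rmax 0 v) <= Rabs (u - v).
Proof.
  unfold Rmax.
  repeat match goal with |- context [Rle_dec ?a ?b] => destruct (Rle_dec a b) end;
  unfold Rabs; repeat match goal with |- context [Rcase_abs ?a] => destruct (Rcase_abs a) end;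
  lra.
Qed.

Lemma lo_le k eta A j : 0 < eta <= 1/5 -> 0 <= A -> (2 <= j <= k)%nat ->
  - (INR k * INR k) <= lo k eta j <= A.
Proof.
  intros He HA Hj. unfold lo. pose proof (sigma_half k (j-1) ltac:(lia) ltac:(lia)).
  pose proof (sigma_bounds k (j-1) ltac:(lia)). lra.
Qed.

Lemma clip_range k eta A y j : 0 < eta <= 1/5 -> 0 <= A -> (2 <= j <= k)%nat ->
  lo k eta j <= clip k eta A y j <= A.
Proof.
  intros He HA Hj. pose proof (lo_le k eta A j He HA Hj). unfold clip, Rmin; repeat match goal with |- context [Rle_dec ?a ?b] => destruct (Rle_dec a b) end;
  unfold Rmax;
  repeat match goal with |- context [Rle_dec ?a ?b] => destruct (Rle_dec a b) end; lra.
Qed.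

Lemma clip_abs k eta A y j : 0 < eta <= 1/5 -> 0 <= A -> (2 <= j <= k)%nat ->
  Rabs (clip k eta A y j) <= Bk k A.
Proof.
  intros He HA Hj. pose proof (lo_le k eta A j He HA Hj). pose proof (clip_range k eta A y j He HA Hj).
  unfold Bk. apply Rabs_le_between. pose proof (pos_INR k). nra.
Qed.

Lemma clip_id k eta A y j : lo k eta j <= y j <= A -> clip k eta A y j = y j.
Proof.
  intros H. unfold clip, Rmin; repeat match goal with |- context [Rle_dec ?a ?b] => destruct (Rle_dec a b) end;
  unfold Rmax;
  repeat match goal with |- context [Rle_dec ?a ?b] => destruct (Rle_dec a b) end; lra.
Qed.

Lemma Bk_pos k A : 0 <= A -> 1 <= Bk k A.
Proof. intros. unfold Bk. pose proof (pos_INR k). nra. Qed.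

Lemma sig_B k A i : 0 <= A -> (2 <= i <= k)%nat -> 0 <= sigma k (i - 1) <= Bk k A.
Proof. intros HA Hi. pose proof (sigma_bounds k (i-1) ltac:(lia)). unfold Bk. lra. Qed.

Definition Mk k A := 8 * Bk k A * Bk k A.
Definition Lk k A := 12 * Bk k A.

Lemma G_bound k eta A y i : 0 < eta <= 1/5 -> 0 <= A -> (2 <= i <= k)%nat ->
  Rabs (G k eta A y i) <= Mk k A.
Proof.
  intros He HA Hi. apply rhs_bound; auto.
  pose proof (Bk_pos k A HA); lra. intros; apply clip_abs; auto. apply sig_B; auto.
Qed.

Lemma G_lip k eta A y z i d : 0 < eta <= 1/5 -> 0 <= A -> 0 <= d ->
  (forall j, (2 <= j <= k)%nat -> Rabs (y j - z j) <= d) -> (2 <= i <= k)%nat ->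
  Rabs (G k eta A y i - G k eta A z i) <= Lk k A * d.
Proof.
  intros He HA Hd Hyz Hi. unfold Lk. apply rhs_lip; auto.
  pose proof (Bk_pos k A HA); lra. intros; apply clip_abs; auto. intros; apply clip_abs; auto.
  intros j Hj. eapply Rle_trans. apply clip_lip. auto. apply sig_B; auto.
Qed.

Lemma G_sign k eta A d y i : 0 < eta <= 1/5 -> 0 <= A -> 0 <= d < 1 ->
  inbox k (lo k eta) (fun _ => A) d y -> (2 <= i <= k)%nat ->
  (y i = A + d -> G k eta A y i <= 0) /\ (y i = lo k eta i - d -> 0 <= G k eta A y i).
Proof.
  intros He HA Hd Hy Hi.
  assert (Hz : forall j, (2 <= j <= k)%nat -> - sigma k (j - 1) + eta - 0 <= clip k eta A y j <= A + 0).
  { intros j Hj. pose proof (clip_range k eta A y j He HA Hj). unfold lo in H. lra. }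
  destruct (sign_rhs k eta A 0 (clip k eta A y) i He HA ltac:(lra) Hz Hi) as [H1 H2].
  pose proof (lo_le k eta A i He HA Hi).
  split; intros Heq; unfold G.
  - apply H1. unfold clip. rewrite Heq. unfold Rmin; repeat match goal with |- context [Rle_dec ?a ?b] => destruct (Rle_dec a b) end;
    unfold Rmax; repeat match goal with |- context [Rle_dec ?a ?b] => destruct (Rle_dec a b) end; lra.
  - apply H2. unfold clip. rewrite Heq. unfold lo in *. unfold Rmin; repeat match goal with |- context [Rle_dec ?a ?b] => destruct (Rle_dec a b) end;
    unfold Rmax; repeat match goal with |- context [Rle_dec ?a ?b] => destruct (Rle_dec a b) end; lra.
Qed.

Fixpoint X k eta A (b0 : nat -> R) (n : nat) : R -> nat -> R :=
  match n with
  | O => fun _ => b0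
  | S n => fun t i => b0 i + RInt (fun s => G k eta A (X k eta A b0 n s) i) 0 t
  end.

Lemma Mk_pos k A : 0 <= A -> 0 <= Mk k A.
Proof. intros. unfold Mk. pose proof (Bk_pos k A H). nra. Qed.
Lemma Lk_pos k A : 0 <= A -> 0 < Lk k A.
Proof. intros. unfold Lk. pose proof (Bk_pos k A H). nra. Qed.

Lemma exp_ge x : 1 + x <= exp x.
Proof. destruct (Req_dec x 0) as [->|H]. rewrite exp_0; lra. left; apply exp_ineq1; auto. Qed.

Lemma exR (g : R -> R) a b : (forall z, continuous g z) -> ex_RInt g a b.
Proof. intros H. apply (ex_RInt_continuous (V:=R_CompleteNormedModule)). intros; apply H. Qed.

Lemma RIntR_correct (g : R -> R) a b : ex_RInt g a b -> is_RInt g a b (RInt g a b).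
Proof. intros H. exact (RInt_correct (V:=R_CompleteNormedModule) g a b H). Qed.

Lemma RInt_bound (g : R -> R) a b M : ex_RInt g a b ->
  (forall s, Rmin a b <= s <= Rmax a b -> Rabs (g s) <= M) -> Rabs (RInt g a b) <= Rabs (b - a) * M.
Proof.
  intros Hex Hb. apply (norm_RInt_le_const_abs g a b (RInt g a b) M).
  intros; apply Hb; auto. exact (RInt_correct (V:=R_CompleteNormedModule) g a b Hex).
Qed.

Lemma X_lip k eta A b0 : 0 < eta <= 1/5 -> 0 <= A -> forall n i t s, (2 <= i <= k)%nat ->
  Rabs (X k eta A b0 n t i - X k eta A b0 n s i) <= Mk k A * Rabs (t - s).
Proof.
  intros He HA n. induction n as [|n IH]; intros i t s Hi.
  - simpl. rewrite Rminus_eq_0, Rabs_R0. pose proof (Mk_pos k A HA). pose proof (Rabs_pos (t-s)). nra.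
  - set (g := fun u => G k eta A (X k eta A b0 n u) i).
    assert (Hc : forall u, continuous g u).
    { apply (lip_cont g (Lk k A * Mk k A)).
      pose proof (Mk_pos k A HA); pose proof (Lk_pos k A HA); nra.
      intros a b. unfold g. rewrite Rmult_assoc. apply G_lip; auto.
      pose proof (Mk_pos k A HA). pose proof (Rabs_pos (a-b)). nra. }
    assert (Hex : forall a b, ex_RInt g a b) by (intros; apply exR; apply Hc).
    simpl. fold g.
    replace (b0 i + RInt g 0 t - (b0 i + RInt g 0 s)) with (RInt g s t).
    2:{ pose proof (RInt_Chasles (V:=R_CompleteNormedModule) g 0 s t (Hex _ _) (Hex _ _)) as HC.
         change (RInt g 0 s + RInt g s t = RInt g 0 t) in HC. lra. }
    rewrite Rmult_comm. apply RInt_bound; auto. intros; apply G_bound; auto.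
Qed.

Lemma XG_cont k eta A b0 : 0 < eta <= 1/5 -> 0 <= A -> forall n i u, (2 <= i <= k)%nat ->
  continuous (fun s => G k eta A (X k eta A b0 n s) i) u.
Proof.
  intros He HA n i u Hi.
  apply (lip_cont _ (Lk k A * Mk k A)).
  pose proof (Mk_pos k A HA); pose proof (Lk_pos k A HA); nra.
  intros a b. rewrite Rmult_assoc. apply G_lip; auto.
  pose proof (Mk_pos k A HA). pose proof (Rabs_pos (a-b)). nra.
  intros; apply X_lip; auto.
Qed.

Lemma X_S k eta A b0 n t i :
  X k eta A b0 (S n) t i = b0 i + RInt (fun s => G k eta A (X k eta A b0 n s) i) 0 t.
Proof. reflexivity. Qed.

Lemma X_diff k eta A b0 : 0 < eta <= 1/5 -> 0 <= A -> forall n t i, 0 <= t -> (2 <= i <= k)%nat ->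
  Rabs (X k eta A b0 (S n) t i - X k eta A b0 n t i) <=
    Mk k A / (2 * Lk k A) * exp (2 * Lk k A * t) * (/2)^n.
Proof.
  intros He HA.
  pose proof (Mk_pos k A HA) as HM. pose proof (Lk_pos k A HA) as HL.
  set (M := Mk k A) in *. set (L := Lk k A) in *.
  set (K := M / (2 * L)).
  assert (HK : K * (2 * L) = M) by (unfold K; field; lra).
  assert (HK0 : 0 <= K) by (unfold K; apply Rdiv_le_0_compat; lra).
  intro n. induction n as [|n IH]; intros t i Ht Hi.
  - rewrite X_S. simpl.
    assert (E : forall a b : R, a + b - a = b) by (intros; ring). rewrite E.
    eapply Rle_trans. apply (RInt_bound _ 0 t M).
    apply exR. intros; apply continuous_const.
    intros; apply G_bound; auto.
    rewrite Rminus_0_r, Rabs_pos_eq by lra.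
    pose proof (exp_ge (2 * L * t)). nra.
  - rewrite (X_S k eta A b0 (S n)), (X_S k eta A b0 n).
    set (g1 := fun s => G k eta A (X k eta A b0 (S n) s) i).
    set (g0 := fun s => G k eta A (X k eta A b0 n s) i).
    assert (E : forall a b c : R, a + b - (a + c) = b - c) by (intros; ring). rewrite E.
    assert (I1 := RIntR_correct g1 0 t (exR _ _ _ (fun u => XG_cont k eta A b0 He HA (S n) i u Hi))).
    assert (I0 := RIntR_correct g0 0 t (exR _ _ _ (fun u => XG_cont k eta A b0 He HA n i u Hi))).
    pose proof (is_RInt_minus (V:=R_NormedModule) _ _ _ _ _ _ I1 I0) as Id.
    set (F := fun s => K * exp (2 * L * s) * (/2)^n / 2).
    set (dF := fun s => L * (K * exp (2 * L * s) * (/2)^n)).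
    assert (HF : is_RInt dF 0 t (minus (F t) (F 0))).
    { apply (is_RInt_derive (V:=R_CompleteNormedModule)).
      - intros x _. unfold F, dF. auto_derive; auto. field.
      - intros x _. unfold dF. apply (ex_derive_continuous (K:=R_AbsRing) (V:=R_NormedModule)).
        auto_derive; auto. }
    change (Rabs (RInt g1 0 t - RInt g0 0 t)) with (norm (minus (RInt g1 0 t) (RInt g0 0 t))).
    eapply Rle_trans.
    apply (norm_RInt_le (V:=R_NormedModule) (fun y => minus (g1 y) (g0 y)) dF 0 t _ _ Ht); [|exact Id|exact HF].
    + intros s Hs. change (Rabs (g1 s - g0 s) <= dF s). unfold g1, g0, dF.
      apply G_lip; auto.
      pose proof (exp_pos (2 * L * s)). pose proof (pow_le (/2) n ltac:(lra)).
      apply Rmult_le_pos; [apply Rmult_le_pos|]; lra.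
      intros j Hj. apply IH; auto; lra.
    + change (F t - F 0 <= K * exp (2 * L * t) * (/ 2) ^ S n).
      unfold F. simpl.
      pose proof (exp_pos (2 * L * 0)). pose proof (pow_le (/2) n ltac:(lra)).
      assert (0 <= K * exp (2 * L * 0) * (/ 2) ^ n / 2).
      { apply Rmult_le_pos; [|lra]. apply Rmult_le_pos; [apply Rmult_le_pos|]; lra. }
      lra.
Qed.

Lemma small_pow C e : 0 < e -> exists N, forall n, (N <= n)%nat -> C * (/2)^n < e.
Proof.
  intros He.
  assert (Hh : Rabs (/2) < 1) by (rewrite Rabs_pos_eq; lra).
  assert (Hp : 0 < e / (Rabs C + 1)) by (apply Rdiv_lt_0_compat; [lra| pose proof (Rabs_pos C); lra]).
  destruct (pow_lt_1_zero _ Hh _ Hp) as [N HN]. exists N. intros n Hn.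
  specialize (HN n Hn). rewrite Rabs_pos_eq in HN by (apply pow_le; lra).
  pose proof (Rabs_pos C). pose proof (pow_le (/2) n ltac:(lra)).
  assert (E : e / (Rabs C + 1) * (Rabs C + 1) = e) by (field; lra).
  assert (C <= Rabs C) by apply Rle_abs.
  nra.
Qed.

Lemma le_of_pow x y C : (forall n, x <= y + C * (/2)^n) -> x <= y.
Proof.
  intros H. apply Rnot_lt_le. intros Hc.
  destruct (small_pow C (x - y) ltac:(lra)) as [N HN].
  specialize (HN N (le_n _)). specialize (H N). lra.
Qed.

Lemma exp_mono c t t0 : 0 <= c -> t <= t0 -> exp (c * t) <= exp (c * t0).
Proof.
  intros Hc Ht. destruct (Req_dec (c * t) (c * t0)) as [E|E]. rewrite E; lra.
  left. apply exp_increasing. nra.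
Qed.

Definition Qk k A t0 := Mk k A / (2 * Lk k A) * exp (2 * Lk k A * t0).

Lemma Qk_pos k A t0 : 0 <= A -> 0 <= Qk k A t0.
Proof.
  intros HA. unfold Qk. pose proof (Mk_pos k A HA). pose proof (Lk_pos k A HA).
  apply Rmult_le_pos. apply Rdiv_le_0_compat; lra. left; apply exp_pos.
Qed.

Lemma X_unif k eta A b0 t0 : 0 < eta <= 1/5 -> 0 <= A -> forall n t i, 0 <= t <= t0 -> (2 <= i <= k)%nat ->
  Rabs (X k eta A b0 (S n) t i - X k eta A b0 n t i) <= Qk k A t0 * (/2)^n.
Proof.
  intros He HA n t i Ht Hi. eapply Rle_trans. apply X_diff; auto; lra.
  unfold Qk. pose proof (Mk_pos k A HA). pose proof (Lk_pos k A HA).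
  apply Rmult_le_compat_r. apply pow_le; lra.
  apply Rmult_le_compat_l. apply Rdiv_le_0_compat; lra. apply exp_mono; lra.
Qed.

Lemma X_tail k eta A b0 t0 : 0 < eta <= 1/5 -> 0 <= A -> forall n m t i, 0 <= t <= t0 -> (2 <= i <= k)%nat ->
  Rabs (X k eta A b0 (n + m) t i - X k eta A b0 n t i) <= 2 * Qk k A t0 * (/2)^n * (1 - (/2)^m).
Proof.
  intros He HA n m t i Ht Hi. induction m as [|m IH].
  - rewrite Nat.add_0_r, Rminus_eq_0, Rabs_R0. simpl. lra.
  - replace (n + S m)%nat with (S (n + m)) by lia.
    pose proof (X_unif k eta A b0 t0 He HA (n + m) t i Ht Hi) as H1.
    rewrite pow_add in H1.
    replace (X k eta A b0 (S (n + m)) t i - X k eta A b0 n t i) with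
      ((X k eta A b0 (S (n + m)) t i - X k eta A b0 (n + m) t i) + (X k eta A b0 (n + m) t i - X k eta A b0 n t i)) by ring.
    eapply Rle_trans. apply Rabs_triang.
    change ((/2)^(S m)) with (/2 * (/2)^m). set (p := (/2)^n) in *. set (q := (/2)^m) in *. set (Q := Qk k A t0) in *. lra.
Qed.

Lemma X_tail' k eta A b0 t0 : 0 < eta <= 1/5 -> 0 <= A -> forall n m t i, (n <= m)%nat -> 0 <= t <= t0 -> (2 <= i <= k)%nat ->
  Rabs (X k eta A b0 m t i - X k eta A b0 n t i) <= 2 * Qk k A t0 * (/2)^n.
Proof.
  intros He HA n m t i Hnm Ht Hi. replace m with (n + (m - n))%nat by lia.
  eapply Rle_trans. apply X_tail; eauto.
  pose proof (Qk_pos k A t0 HA). pose proof (pow_le (/2) n ltac:(lra)). pose proof (pow_le (/2) (m-n) ltac:(lra)).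
  assert (0 <= 2 * Qk k A t0 * (/ 2) ^ n) by (apply Rmult_le_pos; lra). nra.
Qed.

Definition xl k eta A b0 t i := real (Lim_seq (fun n => X k eta A b0 n t i)).

Lemma xl_lim k eta A b0 t i : 0 < eta <= 1/5 -> 0 <= A -> 0 <= t -> (2 <= i <= k)%nat ->
  is_lim_seq (fun n => X k eta A b0 n t i) (xl k eta A b0 t i).
Proof.
  intros He HA Ht Hi.
  assert (Hc : ex_lim_seq_cauchy (fun n => X k eta A b0 n t i)).
  { intros eps. destruct (small_pow (4 * Qk k A t) eps (cond_pos eps)) as [N HN].
    exists N. intros n m Hn Hm.
    pose proof (X_tail' k eta A b0 t He HA N n t i Hn ltac:(lra) Hi) as H1.
    pose proof (X_tail' k eta A b0 t He HA N m t i Hm ltac:(lra) Hi) as H2.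
    specialize (HN N (le_n _)).
    replace (X k eta A b0 n t i - X k eta A b0 m t i) with
      ((X k eta A b0 n t i - X k eta A b0 N t i) - (X k eta A b0 m t i - X k eta A b0 N t i)) by ring.
    eapply Rle_lt_trans. apply Rabs_triang. rewrite Rabs_Ropp. lra. }
  apply ex_lim_seq_cauchy_corr in Hc. destruct Hc as [l Hl].
  unfold xl. rewrite (is_lim_seq_unique _ _ Hl). simpl. exact Hl.
Qed.

Lemma xl_tail k eta A b0 t0 t i : 0 < eta <= 1/5 -> 0 <= A -> 0 <= t <= t0 -> (2 <= i <= k)%nat ->
  forall n, Rabs (xl k eta A b0 t i - X k eta A b0 n t i) <= 2 * Qk k A t0 * (/2)^n.
Proof.
  intros He HA Ht Hi n. pose proof (xl_lim k eta A b0 t i He HA ltac:(lra) Hi) as Hl.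
  set (c := 2 * Qk k A t0 * (/2)^n).
  assert (Hev : forall m, (n <= m)%nat -> Rabs (X k eta A b0 m t i - X k eta A b0 n t i) <= c)
    by (intros m Hm; apply X_tail'; auto).
  apply Rabs_le_between. split.
  - assert (Ev : eventually (fun m => X k eta A b0 n t i - c <= X k eta A b0 m t i)).
    { exists n. intros m Hm. pose proof (proj1 (Rabs_le_between _ _) (Hev m Hm)). lra. }
    assert (H := is_lim_seq_le_loc _ _ _ _ Ev (is_lim_seq_const _) Hl).
    simpl in H. lra.
  - assert (Ev : eventually (fun m => X k eta A b0 m t i <= X k eta A b0 n t i + c)).
    { exists n. intros m Hm. pose proof (proj1 (Rabs_le_between _ _) (Hev m Hm)). lra. }
    assert (H := is_lim_seq_le_loc _ _ _ _ Ev Hl (is_lim_seq_const _)).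
    simpl in H. lra.
Qed.

Lemma xl_lip k eta A b0 a b i : 0 < eta <= 1/5 -> 0 <= A -> 0 <= a -> 0 <= b -> (2 <= i <= k)%nat ->
  Rabs (xl k eta A b0 a i - xl k eta A b0 b i) <= Mk k A * Rabs (a - b).
Proof.
  intros He HA Ha Hb Hi.
  apply (le_of_pow _ _ (4 * Qk k A (Rmax a b))). intros n.
  pose proof (Rmax_l a b). pose proof (Rmax_r a b).
  pose proof (xl_tail k eta A b0 (Rmax a b) a i He HA ltac:(lra) Hi n) as H1.
  pose proof (xl_tail k eta A b0 (Rmax a b) b i He HA ltac:(lra) Hi n) as H2.
  pose proof (X_lip k eta A b0 He HA n i a b Hi) as H3.
  replace (xl k eta A b0 a i - xl k eta A b0 b i) with
    ((xl k eta A b0 a i - X k eta A b0 n a i) + (X k eta A b0 n a i - X k eta A b0 n b i)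
      - (xl k eta A b0 b i - X k eta A b0 n b i)) by ring.
  eapply Rle_trans. apply Rabs_triang. rewrite Rabs_Ropp.
  eapply Rle_trans. apply Rplus_le_compat_r. apply Rabs_triang. lra.
Qed.

Definition sol k eta A b0 t i := xl k eta A b0 (Rmax 0 t) i.

Lemma sol_lip k eta A b0 a b i : 0 < eta <= 1/5 -> 0 <= A -> (2 <= i <= k)%nat ->
  Rabs (sol k eta A b0 a i - sol k eta A b0 b i) <= Mk k A * Rabs (a - b).
Proof.
  intros He HA Hi. unfold sol. eapply Rle_trans. apply xl_lip; auto; apply Rmax_l.
  apply Rmult_le_compat_l. apply Mk_pos; auto. apply rmax0_lip.
Qed.

Lemma Gsol_cont k eta A b0 i u : 0 < eta <= 1/5 -> 0 <= A -> (2 <= i <= k)%nat ->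
  continuous (fun s => G k eta A (sol k eta A b0 s) i) u.
Proof.
  intros He HA Hi.
  apply (lip_cont _ (Lk k A * Mk k A)).
  pose proof (Mk_pos k A HA); pose proof (Lk_pos k A HA); nra.
  intros a b. rewrite Rmult_assoc. apply G_lip; auto.
  pose proof (Mk_pos k A HA). pose proof (Rabs_pos (a-b)). nra.
  intros; apply sol_lip; auto.
Qed.

Lemma int_eq k eta A b0 t i : 0 < eta <= 1/5 -> 0 <= A -> 0 <= t -> (2 <= i <= k)%nat ->
  sol k eta A b0 t i = b0 i + RInt (fun s => G k eta A (sol k eta A b0 s) i) 0 t.
Proof.
  intros He HA Ht Hi.
  set (g := fun s => G k eta A (sol k eta A b0 s) i).
  pose proof (Qk_pos k A t HA). pose proof (Lk_pos k A HA).
  set (Q := Qk k A t) in *. set (L := Lk k A) in *.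
  assert (Hb : Rabs (sol k eta A b0 t i - (b0 i + RInt g 0 t)) <= 0).
  { apply (le_of_pow _ _ (2 * Q + t * L * (2 * Q))). intros n.
    set (gn := fun s => G k eta A (X k eta A b0 n s) i).
    assert (Hsol : sol k eta A b0 t i = xl k eta A b0 t i) by (unfold sol; rewrite Rmax_right; auto).
    pose proof (xl_tail k eta A b0 t t i He HA ltac:(lra) Hi (S n)) as H1.
    rewrite X_S in H1. fold gn in H1.
    assert (In := RIntR_correct gn 0 t (exR _ _ _ (fun u => XG_cont k eta A b0 He HA n i u Hi))).
    assert (Ig := RIntR_correct g 0 t (exR _ _ _ (fun u => Gsol_cont k eta A b0 i u He HA Hi))).
    pose proof (is_RInt_minus (V:=R_NormedModule) _ _ _ _ _ _ In Ig) as Id.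
    assert (H2 : norm (minus (RInt gn 0 t) (RInt g 0 t)) <= Rabs (t - 0) * (L * (2 * Q * (/2)^n))).
    { apply (norm_RInt_le_const_abs (V:=R_NormedModule) (fun y => minus (gn y) (g y))); [|exact Id].
      intros s Hs. rewrite Rmin_left, Rmax_right in Hs by lra.
      change (Rabs (gn s - g s) <= L * (2 * Q * (/ 2) ^ n)). unfold gn, g.
      apply G_lip; auto.
      pose proof (pow_le (/2) n ltac:(lra)). apply Rmult_le_pos; [apply Rmult_le_pos|]; lra.
      intros j Hj. unfold sol. rewrite Rmax_right by lra.
      rewrite <- Rabs_Ropp, Ropp_minus_distr. apply xl_tail; auto. }
    change (Rabs (RInt gn 0 t - RInt g 0 t) <= Rabs (t - 0) * (L * (2 * Q * (/ 2) ^ n))) in H2.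
    rewrite Rminus_0_r, (Rabs_pos_eq t) in H2 by lra.
    rewrite Hsol.
    replace (xl k eta A b0 t i - (b0 i + RInt g 0 t)) with
      ((xl k eta A b0 t i - (b0 i + RInt gn 0 t)) + (RInt gn 0 t - RInt g 0 t)) by ring.
    eapply Rle_trans. apply Rabs_triang.
    change ((/2)^(S n)) with (/2 * (/2)^n) in H1.
    pose proof (pow_le (/2) n ltac:(lra)).
    assert (0 <= 2 * Q * (/2)^n) by (apply Rmult_le_pos; lra).
    fold Q in H1. nra. }
  pose proof (Rabs_pos (sol k eta A b0 t i - (b0 i + RInt g 0 t))).
  assert (Rabs (sol k eta A b0 t i - (b0 i + RInt g 0 t)) = 0) by lra.
  apply Rabs_eq_0 in H2. lra.
Qed.

Lemma right_le0 : filter_le (at_right 0) (locally 0).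
Proof. intros P [e He]. exists e. intros y Hy _. apply He; auto. Qed.

Lemma sol_deriv k eta A b0 t i : 0 < eta <= 1/5 -> 0 <= A -> 0 < t -> (2 <= i <= k)%nat ->
  is_derive (fun s => sol k eta A b0 s i) t (G k eta A (sol k eta A b0 t) i).
Proof.
  intros He HA Ht Hi.
  set (g := fun s => G k eta A (sol k eta A b0 s) i).
  assert (HD : is_derive (RInt g 0) t (g t)).
  { apply (is_derive_RInt (V:=R_NormedModule) g (RInt g 0) 0 t).
    - exists (mkposreal 1 Rlt_0_1). intros y _.
      apply RIntR_correct, exR. intros; apply Gsol_cont; auto.
    - apply Gsol_cont; auto. }
  pose proof (is_derive_plus (K:=R_AbsRing) (V:=R_NormedModule) (fun _ => b0 i) (RInt g 0) t zero (g t)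
                (is_derive_const _ _) HD) as H3.
  assert (Ev : plus zero (g t) = G k eta A (sol k eta A b0 t) i).
  { unfold g. change (0 + G k eta A (sol k eta A b0 t) i = G k eta A (sol k eta A b0 t) i). ring. }
  rewrite <- Ev.
  apply (is_derive_ext_loc (K:=R_AbsRing) (V:=R_NormedModule) (fun x : R_AbsRing => plus ((fun _ : R_AbsRing => b0 i) x) (RInt g 0 x)) _ t _ ); [|exact H3].
  exists (mkposreal t Ht). intros s Hs. change (Rabs (s - t) < t) in Hs.
  apply Rabs_def2 in Hs.
  change (b0 i + RInt g 0 s = sol k eta A b0 s i). rewrite int_eq; auto; lra.
Qed.

Lemma sol_init k eta A b0 i : 0 < eta <= 1/5 -> 0 <= A -> (2 <= i <= k)%nat ->
  sol k eta A b0 0 i = b0 i.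
Proof.
  intros He HA Hi. unfold sol, xl. rewrite Rmax_left by lra.
  rewrite (Lim_seq_ext _ (fun _ => b0 i)). rewrite Lim_seq_const. reflexivity.
  intros [|n]; auto. rewrite X_S. rewrite RInt_point. change (b0 i + 0 = b0 i). ring.
Qed.

Lemma sol_right k eta A b0 i : 0 < eta <= 1/5 -> 0 <= A -> (2 <= i <= k)%nat ->
  filterlim (fun s => sol k eta A b0 s i) (at_right 0) (locally (sol k eta A b0 0 i)).
Proof.
  intros He HA Hi. apply (filterlim_filter_le_1 (fun s => sol k eta A b0 s i) right_le0).
  apply (lip_cont (fun s => sol k eta A b0 s i) (Mk k A) (Mk_pos k A HA)).
  intros; apply sol_lip; auto.
Qed.

Theorem proposition2p3 :
  forall (k : nat) (eta A : R),
    (2 <= k)%nat -> 0 < eta <= 1 / 5 -> 0 <= A ->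
    (* forward invariance of K *)
    (forall (T : Rbar) (b : R -> nat -> R),
        Rbar_lt 0 T -> is_solution k T b -> inK k eta A (b 0) ->
        forall t : R, 0 <= t -> Rbar_lt t T -> inK k eta A (b t)) /\
    (* global forward existence from data in K *)
    (forall b0 : nat -> R, inK k eta A b0 ->
        exists b : R -> nat -> R,
          (forall i : nat, (2 <= i <= k)%nat -> b 0 i = b0 i) /\
          is_solution k p_infty b).
Proof.
  intros k eta A Hk He HA. split.
  - intros T b HT [Hinit Hder] Hb0 t Ht HtT.
    assert (Z : inbox k (lo k eta) (fun _ => A) 0 (b t)).
    { refine (invariance k (lo k eta) (fun _ => A) (rhs k) eta T b (proj1 He) _ Hinit Hder _ t Ht HtT).
      - intros d y i Hd Hy Hi.
        assert (Hy' : forall j, (2 <= j <= k)%nat -> - sigma k (j - 1) + eta - d <= y j <= A + d).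
        { intros j' Hj'. destruct (Hy j' Hj'). unfold lo in *. lra. }
        destruct (sign_rhs k eta A d y i He HA Hd Hy' Hi) as [H1 H2].
        split. exact H1. intros Heq. apply H2. unfold lo in Heq. lra.
      - intros j' Hj'. destruct (Hb0 j' Hj'). unfold lo. lra. }
    intros j Hj. destruct (Z j Hj). unfold lo in *. lra.
  - intros b0 Hb0. exists (sol k eta A b0).
    assert (Hinv : forall t, 0 <= t -> inbox k (lo k eta) (fun _ => A) 0 (sol k eta A b0 t)).
    { intros t Ht. refine (invariance k (lo k eta) (fun _ => A) (G k eta A) 1 p_infty _ ltac:(lra) _ _ _ _ t Ht I).
      - intros d y i Hd Hy Hi. apply G_sign; auto.
      - intros i Hi. apply sol_right; auto.
      - intros t' Ht' _ i Hi. apply sol_deriv; auto.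
      - intros j Hj. rewrite sol_init; auto. destruct (Hb0 j Hj). unfold lo. lra. }
    split; [|split].
    + intros i Hi. apply sol_init; auto.
    + intros i Hi. apply sol_right; auto.
    + intros t Ht _ i Hi.
      replace (rhs k (sol k eta A b0 t) i) with (G k eta A (sol k eta A b0 t) i).
      apply sol_deriv; auto.
      unfold G. apply rhs_ext; auto. intros j Hj. apply clip_id.
      destruct (Hinv t ltac:(lra) j Hj). lra.
Qed.
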